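(* Let $G$ be a symmetric star topology with compute nodes $V_C$, where $w_v$ is the bandwidth of the edges between compute node $v$ and the center. Let $R,S$ be sets with $|R|<|S|$, $N=|R|+|S|$, initially partitioned among the compute nodes with $N_v$ elements (of $R$ and $S$ together) at node $v$. Let $V_\alpha=\{v\in V_C:\min\{N_v,N-N_v\}<|R|\}$ and $V_\beta=V_C\setminus V_\alpha$. Then any algorithm computing $R\times S$ has (tuple) cost $\Omega(C)$, where \[C=\max\Big\{\max_{v\in V_\alpha}\frac{\min\{N_v,N-N_v\}}{w_v},\ \max_{v\in V_\beta}\frac{|R|}{w_v}\Big\}.\]
   Context: Topology-aware model: the network is a directed graph; each edge $e$ has bandwidth $w_e>0$; compute nodes store data and compute, other nodes only route. A symmetric star topology has compute nodes each connected to a single central routing node by an edge in each direction with equal bandwidth. The input is partitioned without duplication; the algorithm knows topology, bandwidths and local fragment sizes. Computation proceeds in synchronous rounds; the tuple cost of a round is $\max_e|Y(e)|/w_e$ with $|Y(e)|$ the number of elements routed through edge $e$; total cost is the sum over rounds. Computing $R\times S$ means every pair $(r,s)\in R\times S$ is emitted by at least one compute node holding both $r$ and $s$. *)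

(* Defs.v *)
From mathcomp Require Import all_boot all_order all_algebra.
Set Implicit Arguments. Unset Strict Implicit. Unset Printing Implicit Defensive.
Import Order.TTheory GRing.Theory Num.Theory.
Local Open Scope ring_scope.

(* Data elements: R = 'I_nr (tagged inl), S = 'I_ns (tagged inr). *)
Definition elem (nr ns : nat) : finType := ('I_nr + 'I_ns)%type.

(* One synchronous round on a star whose compute nodes are V (the centre is
   implicit).  [out v] = set of elements routed through the edge v -> centre,
   [inc v] = set of elements routed through the edge centre -> v. *)
Record round (V E : finType) := Round { out : V -> {set E}; inc : V -> {set E} }.

Definition state (V E : finType) := V -> {set E}.

Definition valid_round (V E : finType) (H : state V E) (rd : round V E) : Prop :=
  (forall v, out rd v \subset H v) /\
  (forall v, inc rd v \subset \bigcup_(u | u != v) out rd u).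

Definition step (V E : finType) (H : state V E) (rd : round V E) : state V E :=
  fun v => H v :|: inc rd v.

Fixpoint valid_alg (V E : finType) (H : state V E) (alg : seq (round V E)) : Prop :=
  match alg with
  | [::] => True
  | rd :: rest => valid_round H rd /\ valid_alg (step H rd) rest
  end.

Definition final (V E : finType) (H : state V E) (alg : seq (round V E)) : state V E :=
  foldl (@step V E) H alg.

Definition init (V E : finType) (loc : E -> V) : state V E :=
  fun v => [set x | loc x == v].

(* tuple cost of a round: max over edges of |Y(e)| / w_e; both edges of v
   have bandwidth w v. *)
Definition round_cost (R : realFieldType) (V E : finType) (w : V -> R)
  (rd : round V E) : R :=
  \big[Num.max/0]_(v : V) Num.max ((#|out rd v|)%:R / w v) ((#|inc rd v|)%:R / w v).

Definition cost (R : realFieldType) (V E : finType) (w : V -> R)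
  (alg : seq (round V E)) : R :=
  \sum_(rd <- alg) round_cost w rd.

Definition computes_cross (V : finType) (nr ns : nat)
  (H : state V (elem nr ns)) : Prop :=
  forall (r : 'I_nr) (s : 'I_ns), exists v : V,
    (inl r : elem nr ns) \in H v /\ (inr s : elem nr ns) \in H v.

Definition Nv (V E : finType) (loc : E -> V) (v : V) : nat := #|[set x | loc x == v]|.

Definition Cbound (R : realFieldType) (V : finType) (nr ns : nat)
  (loc : elem nr ns -> V) (w : V -> R) : R :=
  let N := (nr + ns)%N in
  let m v := minn (Nv loc v) (N - Nv loc v) in
  Num.max (\big[Num.max/0]_(v : V | (m v < nr)%N) ((m v)%:R / w v))
          (\big[Num.max/0]_(v : V | ~~ (m v < nr)%N) (nr%:R / w v)).

(* Main.v *)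
Require Import Defs.
From mathcomp Require Import all_boot all_order all_algebra zify.
Import Order.TTheory GRing.Theory Num.Theory.
Local Open Scope ring_scope.

Section Comb.
Variables (V E : finType) (v : V) (A : {set E}).

Definition Inv (H : state V E) (S0 R0 : {set E}) :=
  H v \subset A :|: R0 /\ forall u, u != v -> H u :&: A \subset S0.

Lemma inv_alg (alg : seq (round V E)) H S0 R0 :
  valid_alg H alg -> Inv H S0 R0 ->
  Inv (final H alg) (S0 :|: \bigcup_(rd <- alg) out rd v)
                    (R0 :|: \bigcup_(rd <- alg) inc rd v).
Proof.
elim: alg H S0 R0 => [|rd alg IH] H S0 R0 /=.
  by rewrite !big_nil !setU0.
move=> [[Hout Hinc] Hv] [I1 I2].
change (final H (rd :: alg)) with (final (step H rd) alg).
have := IH (step H rd) (S0 :|: out rd v) (R0 :|: inc rd v) Hv.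
rewrite !big_cons !setUA; apply; split.
  by rewrite /step setUA; apply: setUSS I1 (subxx _).
move=> u uv; apply/subsetP => x /setIP [/setUP [Hx|Ix] xA].
  by rewrite setUC inE; apply/orP; right; apply: (subsetP (I2 u uv)); rewrite inE Hx xA.
have /bigcupP [u' u'u xo] := subsetP (Hinc u) x Ix.
case: (eqVneq u' v) => [eu'|u'v].
  by rewrite inE -eu' xo orbT.
by rewrite inE (subsetP (I2 u' u'v)) // inE (subsetP (Hout u')) // xA.
Qed.

Lemma card_bigcup_le (alg : seq (round V E)) (f : round V E -> {set E}) :
  (#|\bigcup_(rd <- alg) f rd| <= \sum_(rd <- alg) #|f rd|)%N.
Proof.
elim: alg => [|rd alg IH]; first by rewrite !big_nil cards0.
rewrite !big_cons cardsU (leq_trans (leq_subr _ _)) // leq_add2l //.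
Qed.
End Comb.

Lemma count_lemma (V : finType) (nr ns : nat) (loc : elem nr ns -> V)
  (alg : seq (round V (elem nr ns))) (v : V) :
  (nr < ns)%N -> valid_alg (init loc) alg ->
  computes_cross (final (init loc) alg) ->
  (minn (minn #|[set x | loc x == v]| #|~: [set x | loc x == v]|) nr <=
   \sum_(rd <- alg) #|out rd v| + \sum_(rd <- alg) #|inc rd v|)%N.
Proof.
move=> ltrs Hv Hc.
set A := [set x | loc x == v].
set S := \bigcup_(rd <- alg) out rd v.
set Rc := \bigcup_(rd <- alg) inc rd v.
set X := S :|: Rc.
set Hf := final (init loc) alg.
have I0 : @Inv _ _ v A (init loc) set0 set0.
  split; first by rewrite setU0 /init.
  move=> u uv; apply/subsetP => x; rewrite !inE => /andP [/eqP e1 /eqP e2].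
  by move: uv; rewrite -e1 e2 eqxx.
have [I1 I2] := @inv_alg _ _ v A alg _ _ _ Hv I0; rewrite !set0U -/S -/Rc -/Hf in I1 I2.
have K : forall x y, x \in A -> x \notin X -> y \notin A -> y \notin X ->
    forall u, x \in Hf u -> y \in Hf u -> False.
  move=> x y xA xX yA yX u xu yu.
  case: (eqVneq u v) => [euv|uv].
    move: (subsetP I1 y); rewrite -euv yu => /(_ isT); rewrite inE (negbTE yA) /=.
    by move=> yR; move: yX; rewrite inE yR orbT.
  move: (subsetP (I2 u uv) x); rewrite inE xu xA => /(_ isT) xS.
  by move: xX; rewrite inE xS.
have Pc : forall (r : 'I_nr) (s : 'I_ns),
    (inl r : elem nr ns) \in X \/ (inr s : elem nr ns) \in X \/
    (((inl r : elem nr ns) \in A) = ((inr s : elem nr ns) \in A)).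
  move=> r s; have [u [h1 h2]] := Hc r s.
  case: (boolP ((inl r : elem nr ns) \in X)) => h3; first by left.
  case: (boolP ((inr s : elem nr ns) \in X)) => h4; first by right; left.
  right; right.
  case: (boolP ((inl r : elem nr ns) \in A)) => h5;
  case: (boolP ((inr s : elem nr ns) \in A)) => h6 //.
    by case: (K _ _ h5 h3 h6 h4 u h1 h2).
  by case: (K _ _ h6 h4 h5 h3 u h2 h1).
suff : (minn (minn #|A| #|~: A|) nr <= #|X|)%N.
  move/leq_trans; apply; rewrite /X cardsU (leq_trans (leq_subr _ _)) //.
  by apply: leq_add; apply: (@card_bigcup_le V).
rewrite leqNgt; apply/negP => hlt.
have : (0 < #|A :\: X|)%N.
  have := cardsID X A; have := subset_leq_card (subsetIr A X); lia.
rewrite card_gt0 => /set0Pn [a0 /setDP [a0A a0X]].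
have : (0 < #|~: A :\: X|)%N.
  have := cardsID X (~: A); have := subset_leq_card (subsetIr (~: A) X); lia.
rewrite card_gt0 => /set0Pn [b0 /setDP [b0A b0X]].
rewrite inE in b0A.
case: a0 a0A a0X => [r|s] a0A a0X; case: b0 b0A b0X => [r'|s'] b0A b0X.
- suff sub : [set (inr s : elem nr ns) | s in 'I_ns] \subset X.
    move: (subset_leq_card sub); rewrite card_imset; last by move=> ? ? [].
    rewrite card_ord; lia.
  apply/subsetP => y /imsetP [s _ ->].
  case: (boolP ((inr s : elem nr ns) \in X)) => // sX.
  case: (Pc r s) => [h|[h|h1]]; first by rewrite h in a0X.
    by rewrite h in sX.
  case: (Pc r' s) => [h|[h|h2]]; first by rewrite h in b0X.
    by rewrite h in sX.
  by move: b0A; rewrite h2 -h1 a0A.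
- case: (Pc r s') => [h|[h|h]]; [by rewrite h in a0X|by rewrite h in b0X|].
  by move: b0A; rewrite -h a0A.
- case: (Pc r' s) => [h|[h|h]]; [by rewrite h in b0X|by rewrite h in a0X|].
  by move: b0A; rewrite h a0A.
- suff sub : [set (inl r : elem nr ns) | r in 'I_nr] \subset X.
    move: (subset_leq_card sub); rewrite card_imset; last by move=> ? ? [].
    rewrite card_ord; lia.
  apply/subsetP => y /imsetP [r _ ->].
  case: (boolP ((inl r : elem nr ns) \in X)) => // rX.
  case: (Pc r s) => [h|[h|h1]]; first by rewrite h in rX.
    by rewrite h in a0X.
  case: (Pc r s') => [h|[h|h2]]; first by rewrite h in rX.
    by rewrite h in b0X.
  by move: b0A; rewrite -h2 h1 a0A.
Qed.

Lemma bigmax_ge (R : realDomainType) (I : eqType) (r : seq I) (P : pred I)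
  (F : I -> R) x : x \in r -> P x -> F x <= \big[Num.max/0]_(i <- r | P i) F i.
Proof.
elim: r => // y r IH; rewrite inE big_cons => /orP [/eqP <-|xr] Px.
  by rewrite Px le_max lexx.
case: ifP => _; last exact: IH.
by rewrite le_max IH ?orbT.
Qed.

Lemma bigmax_le (R : realDomainType) (I : Type) (r : seq I) (P : pred I)
  (F : I -> R) K : 0 <= K -> (forall i, P i -> F i <= K) ->
  \big[Num.max/0]_(i <- r | P i) F i <= K.
Proof. by move=> K0 H; elim/big_ind: _ => // x y; rewrite ge_max => -> ->. Qed.

Lemma bigmax_ge0 (R : realDomainType) (I : Type) (r : seq I) (P : pred I)
  (F : I -> R) : 0 <= \big[Num.max/0]_(i <- r | P i) F i.
Proof.
elim: r => [|y r IH]; first by rewrite big_nil.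
rewrite big_cons; case: ifP => // _; by rewrite le_max IH orbT.
Qed.

Lemma cost_ge0 (R : realFieldType) (V E : finType) (w : V -> R) (alg : seq (round V E)) :
  0 <= cost w alg.
Proof. by apply: sumr_ge0 => rd _; apply: bigmax_ge0. Qed.

Lemma cost_out (R : realFieldType) (V E : finType) (w : V -> R)
  (alg : seq (round V E)) v : 0 < w v ->
  (\sum_(rd <- alg) #|out rd v|)%:R / w v <= cost w alg /\
  (\sum_(rd <- alg) #|inc rd v|)%:R / w v <= cost w alg.
Proof.
move=> wp; rewrite !natr_sum !mulr_suml; split; apply: ler_sum => rd _;
  rewrite /round_cost;
  (apply: le_trans (@bigmax_ge _ _ _ xpredT
     (fun v => Num.max (#|out rd v|%:R / w v) (#|inc rd v|%:R / w v)) _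
     (mem_index_enum v) isT));
  by rewrite le_max lexx ?orbT.
Qed.

Theorem theorem8 :
  exists c : rat, 0 < c /\
  forall (R : realFieldType) (V : finType) (w : V -> R) (nr ns : nat)
    (loc : elem nr ns -> V) (alg : seq (round V (elem nr ns))),
    (forall v, 0 < w v) ->
    (nr < ns)%N ->
    valid_alg (init loc) alg ->
    computes_cross (final (init loc) alg) ->
    ratr c * Cbound loc w <= cost w alg.
Proof.
exists (2%:R^-1); split; first by [].
move=> R V w nr ns loc alg wp ltrs Hv Hc.
rewrite fmorphV (rmorph_nat _ 2) ler_pdivrMl ?ltr0n //.
have key : forall v, (minn (minn (Nv loc v) ((nr + ns)%N - Nv loc v)) nr)%:R / w v
                     <= 2%:R * cost w alg.
  move=> v.
  have hc := @count_lemma V nr ns loc alg v ltrs Hv Hc.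
  have hN : (#|[set x | loc x == v]| + #|~: [set x | loc x == v]|)%N = (nr + ns)%N.
    by rewrite cardsC card_sum !card_ord.
  have e : ((nr + ns) - Nv loc v)%N = #|~: [set x | loc x == v]| by rewrite /Nv; lia.
  rewrite e /Nv.
  have [h1 h2] := @cost_out R V _ w alg v (wp v).
  apply: le_trans (_ : (\sum_(rd <- alg) #|out rd v| + \sum_(rd <- alg) #|inc rd v|)%N%:R / w v <= _).
    by rewrite ler_pM2r ?invr_gt0 // ler_nat.
  by rewrite natrD mulrDl mulrDl mul1r lerD.
have c0 := @cost_ge0 R V _ w alg.
have c20 : 0 <= 2%:R * cost w alg by rewrite mulr_ge0.
rewrite /Cbound ge_max; apply/andP; split; apply: bigmax_le => // v hv;
  apply: le_trans (key v); rewrite ler_pM2r ?invr_gt0 // ler_nat.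
  by move: hv; lia.
by move: hv; lia.
Qed.
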